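(* Let $C\subseteq[n]$ (viewed as a single column of boxes of $[n]^2$, with a box in row $i$ for each $i\in C$), and let $r_C$ be the rank function of the Schubert matroid $SM_n(C)$. Let $S$ be a $k$-subset of $[n]$ and let $\pi=\pi_1\pi_2\cdots\pi_k$ be any ordering of the elements of $S$. Then \[r_C(S)=|\mathcal{F}_\pi(C)|.\]
   Context: For $T=\{a_1<\cdots<a_k\}$ and $S=\{b_1<\cdots<b_k\}$ subsets of $[n]$, write $T\le S$ if $\#T=\#S$ and $a_i\le b_i$ for all $i$. The Schubert matroid $SM_n(C)$ is the matroid on $[n]$ whose bases are $\{T\subseteq[n]\colon T\le C\}$; its rank function is $r_C(A)=\max\{\#(A\cap B)\colon B\text{ a basis}\}$. The filling $\mathcal{F}_\pi(C)$: starting with all boxes of $C$ empty, for $t=1,\ldots,k$ in turn place $\pi_t$ into the topmost still-empty box of $C$ whose row index is $\ge\pi_t$; if no such box exists, skip $\pi_t$. $|\mathcal{F}|$ denotes the number of nonempty boxes of a filling $\mathcal{F}$. *)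

(* Defs.v *)
From mathcomp Require Import all_boot all_order.
Set Implicit Arguments. Unset Strict Implicit. Unset Printing Implicit Defensive.

(* [n] is modelled by 'I_n = {0,...,n-1} (order-preserving relabelling). *)

Definition sorted_elems n (A : {set 'I_n}) : seq nat :=
  sort leq [seq val x | x <- enum A].

Definition gale_le n (T S : {set 'I_n}) : bool :=
  (#|T| == #|S|) &&
  all2 leq (sorted_elems T) (sorted_elems S).

Definition schubert_basis n (C B : {set 'I_n}) : bool := gale_le B C.

Definition schubert_rank n (C A : {set 'I_n}) : nat :=
  \max_(B : {set 'I_n} | schubert_basis C B) #|A :&: B|.

(* A filling of the column C: F i = Some v means the box in row i (i \in C)
   contains v; None means empty. *)
Definition filling_type n := {ffun 'I_n -> option 'I_n}.

Definition empty_filling n : filling_type n := [ffun _ => None].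

Definition target_box n (C : {set 'I_n}) (F : filling_type n) (x : 'I_n)
  : option 'I_n :=
  [pick i | [&& i \in C, F i == None, x <= i &
     [forall j, ((j \in C) && (F j == None) && (x <= j)) ==> (i <= j)]]].

Definition fill_step n (C : {set 'I_n}) (F : filling_type n) (x : 'I_n)
  : filling_type n :=
  match target_box C F x with
  | Some i => [ffun j => if j == i then Some x else F j]
  | None => F
  end.

Definition filling n (C : {set 'I_n}) (pi : seq 'I_n) : filling_type n :=
  foldl (fill_step C) (empty_filling n) pi.

Definition filling_size n (C : {set 'I_n}) (F : filling_type n) : nat :=
  #|[set i in C | F i != None]|.

(* Main.v *)
Require Import Defs.
From mathcomp Require Import all_boot zify.
Set Implicit Arguments. Unset Strict Implicit. Unset Printing Implicit Defensive.

Definition up n (t : nat) : {set 'I_n} := [set x : 'I_n | t <= x].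

Lemma card_up_count n (A : {set 'I_n}) t :
  #|A :&: up n t| = count (leq t) (sorted_elems A).
Proof.
rewrite /sorted_elems.
rewrite (permP (permEl (perm_sort leq _))) count_map.
rewrite cardE /enum_mem size_filter count_filter.
apply: eq_count => x /=; rewrite !inE andbC //.
Qed.

Lemma size_sorted_elems n (A : {set 'I_n}) : size (sorted_elems A) = #|A|.
Proof. by rewrite /sorted_elems size_sort size_map cardE. Qed.

Lemma sorted_sorted_elems n (A : {set 'I_n}) : sorted leq (sorted_elems A).
Proof. exact: (sort_sorted leq_total). Qed.

Lemma all2_count (s s' : seq nat) t : all2 leq s s' -> count (leq t) s <= count (leq t) s'.
Proof.
elim: s s' => [|a s IH] [|b s'] //= /andP [ab H].
apply: leq_add; last exact: IH.
case: (leqP t a) => ta; last by [].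
by rewrite (leq_trans ta ab).
Qed.

Lemma count_all2 (s s' : seq nat) : sorted leq s -> sorted leq s' -> size s = size s' ->
  (forall t, count (leq t) s <= count (leq t) s') -> all2 leq s s'.
Proof.
elim: s s' => [|a s IH] [|b s'] //= Ss Ss' [Hsz] H.
have As : all (leq a) s by apply: (order_path_min leq_trans).
have Bs : all (leq b) s' by apply: (order_path_min leq_trans).
have ab : a <= b.
  have := H a; rewrite leqnn (eqP (etrans (esym (all_count _ _)) As)) add1n Hsz.
  case: (leqP a b) => // ba; rewrite add0n ltnNge count_size //.
apply/andP; split => //.
apply: IH.
- exact: path_sorted Ss.
- exact: path_sorted Ss'.
- exact: Hsz.
move=> t; case: (leqP t b) => tb.
  have : all (leq t) s'.
    by apply/allP => x /(allP Bs) bx; apply: leq_trans bx.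
  rewrite all_count => /eqP ->; rewrite -Hsz count_size //.
have := H t; rewrite (leqNgt t b) tb /= add0n.
have -> : (t <= a) = false by apply/negbTE; rewrite -ltnNge (leq_ltn_trans ab tb).
by [].
Qed.

Lemma gale_count n (B C : {set 'I_n}) t : gale_le B C -> #|B :&: up n t| <= #|C :&: up n t|.
Proof. by case/andP => _ H; rewrite !card_up_count; apply: all2_count. Qed.

Lemma count_gale n (B C : {set 'I_n}) : #|B| = #|C| ->
  (forall t, #|B :&: up n t| <= #|C :&: up n t|) -> gale_le B C.
Proof.
move=> Hc H; apply/andP; split; first by rewrite Hc.
apply: count_all2; rewrite ?sorted_sorted_elems ?size_sorted_elems //.
by move=> t; rewrite -!card_up_count.
Qed.

Lemma target_boxP n (C : {set 'I_n}) (F : filling_type n) y :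
  (exists i, target_box C F y = Some i /\
     [/\ i \in C, F i == None, y <= i &
        forall j, j \in C -> F j == None -> y <= j -> i <= j])
  \/ (target_box C F y = None /\ forall j, j \in C -> y <= j -> F j != None).
Proof.
rewrite /target_box; case: pickP => [i /and4P [iC Fi yi /forallP H] | H].
  left; exists i; split => //; split => // j jC Fj yj.
  by have := H j; rewrite jC Fj yj.
right; split => // j jC yj; apply/negP => Fj.
pose P := fun k : 'I_n => [&& k \in C, F k == None & y <= k].
have Pj : P j by rewrite /P jC Fj yj.
case: (arg_minnP (fun k : 'I_n => nat_of_ord k) Pj) => k /and3P [kC Fk yk] Hk.
have := H k; rewrite kC Fk yk /=.
move/negbT/negP; apply; apply/forallP => l; apply/implyP => /andP [/andP [lC Fl] yl].
by apply: Hk; rewrite /P lC Fl yl.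
Qed.

Definition Inv n (C : {set 'I_n}) (p : seq 'I_n) (F : filling_type n) :=
 [/\ forall i j x, F i = Some x -> F j = Some x -> i = j,
     forall i x, F i = Some x -> [/\ x <= i, x \in p & i \in C],
     forall x, x \in p -> (forall i, F i != Some x) ->
        forall c, c \in C -> x <= c -> F c != None
   & forall b x c, F b = Some x -> c \in C -> x <= c -> c < b -> F c != None].

Lemma Inv_filling n (C : {set 'I_n}) p : uniq p -> Inv C p (filling C p).
Proof.
elim/last_ind: p => [|p y IH].
  move=> _; split => //.
  - by move=> i j x; rewrite /filling /= ffunE.
  - by move=> i x; rewrite /filling /= ffunE.
  - by move=> b x c; rewrite /filling /= ffunE.
rewrite rcons_uniq => /andP [yp /IH [I1 I2 I3 I4]].
rewrite /filling foldl_rcons -/(filling C p).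
set F := filling C p.
have mono : forall F' : filling_type n, (forall j, F j != None -> F' j = F j) ->
   forall j, F j != None -> F' j != None.
  by move=> F' HF j Fj; rewrite HF.
rewrite /fill_step.
case: (target_boxP C F y) => [[i [-> [iC Fi yi imin]]] | [-> Hnone]].
- set F' := [ffun j => if j == i then Some y else F j].
  have F'E : forall j, F j != None -> F' j = F j.
    move=> j Fj; rewrite /F' ffunE; case: eqP => // ji.
    by move: Fj; rewrite ji Fi.
  have F'i : F' i = Some y by rewrite /F' ffunE eqxx.
  have F'o : forall j, j != i -> F' j = F j by move=> j /negbTE ji; rewrite /F' ffunE ji.
  have notyF : forall j, F j != Some y.
    move=> j; apply/eqP => /I2 [_ yp' _]; by rewrite yp' in yp.
  split.
  + move=> j1 j2 x.
    case: (eqVneq j1 i) => [-> | n1]; case: (eqVneq j2 i) => [-> | n2] //.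
    * rewrite F'i (F'o _ n2) => -[<-] H; by have := notyF j2; rewrite H eqxx.
    * rewrite F'i (F'o _ n1) => H [ex]; by have := notyF j1; rewrite H ex eqxx.
    * rewrite (F'o _ n1) (F'o _ n2); exact: I1.
  + move=> j x; case: (eqVneq j i) => [-> | nj].
      by rewrite F'i => -[<-]; rewrite mem_rcons inE eqxx.
    rewrite (F'o _ nj) => /I2 [a b c]; by rewrite mem_rcons inE b orbT.
  + move=> x; rewrite mem_rcons inE => /orP [/eqP -> | xp] Hx.
      by have := Hx i; rewrite F'i eqxx.
    have HxF : forall j, F j != Some x.
      move=> j; apply/eqP => Fj; have := Hx j.
      by rewrite F'E ?Fj ?eqxx.
    move=> c cC xc; apply: (mono F' F'E); exact: I3 xp HxF c cC xc.
  + move=> b x c; case: (eqVneq b i) => [-> | nb].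
      rewrite F'i => -[<-] cC yc ci.
      have nci : c != i by rewrite neq_ltn ci.
      rewrite (F'o _ nci); apply/negP => Fc.
      by have := imin c cC Fc yc; rewrite leqNgt ci.
    rewrite (F'o _ nb) => Fb cC xc cb; apply: (mono F' F'E); exact: I4 Fb cC xc cb.
- split => //.
  + move=> i x /I2 [a b c]; by rewrite mem_rcons inE b orbT.
  + move=> x; rewrite mem_rcons inE => /orP [/eqP -> | xp] Hx.
      exact: Hnone.
    exact: I3.
Qed.
Lemma leq_cardU (T : finType) (A B : {set T}) : #|A :|: B| <= #|A| + #|B|.
Proof. by rewrite cardsU leq_subr. Qed.

Lemma ivt (f : nat -> nat) k N : f 0 <= k -> k <= f N ->
  (forall s, f s.+1 <= (f s).+1) -> exists2 s, s <= N & f s = k.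
Proof.
move=> h0 hN hs; elim: N hN => [|N IH] hN.
  by exists 0 => //; apply/eqP; rewrite eqn_leq hN h0.
case: (leqP k (f N)) => hk.
  by case: (IH hk) => s sN fs; exists s => //; apply: leqW.
exists N.+1 => //; apply/eqP; rewrite eqn_leq hN andbT; exact: leq_trans (hs N) hk.
Qed.

Lemma extend n (T C : {set 'I_n}) :
  (forall t, #|T :&: up n t| <= #|C :&: up n t|) ->
  exists B : {set 'I_n}, T \subset B /\ gale_le B C.
Proof.
move=> H.
pose f s := #|T :|: ~: up n s|.
have e0 : up n 0 = setT by apply/setP => x; rewrite !inE.
have f0 : f 0 <= #|C| by have := H 0; rewrite /f e0 !setIT setCT setU0.
have fN : #|C| <= f n.
  apply: subset_leq_card; apply/subsetP => x xC.
  by rewrite !inE -ltnNge ltn_ord orbT.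
have fs : forall s, f s.+1 <= (f s).+1.
  move=> s; rewrite /f.
  apply: (@leq_trans #|(T :|: ~: up n s) :|: [set x : 'I_n | val x == s]|).
    apply: subset_leq_card; apply/subsetP => x; rewrite !inE -!ltnNge.
    case/orP => [-> // | ]; rewrite ltnS leq_eqVlt => /orP [-> | ->]; by rewrite ?orbT.
  rewrite -addn1; apply: leq_trans (leq_cardU _ _) _; rewrite leq_add2l.
  apply/card_le1_eqP => x y; rewrite !inE => /eqP xs /eqP ys; apply: val_inj; by rewrite xs ys.
case: (ivt f0 fN fs) => s _ fsC.
exists (T :|: ~: up n s); split; first exact: subsetUl.
apply: count_gale => // t.
case: (leqP s t) => st.
  apply: leq_trans (H t); apply: subset_leq_card; apply/subsetP => x.
  rewrite !inE => /andP [/orP [xT | xs] tx]; first by rewrite xT tx.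
  by move: xs; rewrite -ltnNge => xs; have := leq_trans st tx; rewrite leqNgt xs.
have e := cardsID (up n t) (T :|: ~: up n s).
have e' := cardsID (up n t) C.
have le : #|C :\: up n t| <= #|(T :|: ~: up n s) :\: up n t|.
  apply: subset_leq_card; apply/subsetP => x; rewrite !inE -!ltnNge => /andP [xt _].
  by rewrite xt (ltn_trans xt st) orbT.
rewrite /f in fsC; lia.
Qed.

Lemma rank_le n (C S : {set 'I_n}) t :
  schubert_rank C S <= #|S :\: up n t| + #|C :&: up n t|.
Proof.
rewrite /schubert_rank; apply/bigmax_leqP => B HB.
apply: leq_trans (_ : #|S :\: up n t| + #|B :&: up n t| <= _); last first.
  by rewrite leq_add2l; apply: gale_count.
apply: leq_trans (leq_cardU _ _); apply: subset_leq_card; apply/subsetP => x.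
by rewrite !inE => /andP [xS xB]; rewrite xS xB; case: (t <= x).
Qed.

Theorem theorem3p3 (n : nat) (C S : {set 'I_n}) (pi : seq 'I_n) :
  perm_eq pi (enum S) ->
  schubert_rank C S = filling_size C (filling C pi).
Proof.
move=> Hperm.
have Hu : uniq pi by rewrite (perm_uniq Hperm) enum_uniq.
have memS : forall x, (x \in pi) = (x \in S) by move=> x; rewrite (perm_mem Hperm) mem_enum.
have [I1 I2 I3 I4] := Inv_filling C Hu.
rewrite /filling_size.
set F := filling C pi in I1 I2 I3 I4 *.
set U := [set i in C | F i != None].
pose g := fun i => odflt i (F i).
have gF : forall i, i \in U -> F i = Some (g i).
  by move=> i; rewrite inE /g => /andP [_]; case: (F i).
have UC : U \subset C by apply/subsetP => i; rewrite inE => /andP [].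
have gle : forall i, i \in U -> g i <= i.
  by move=> i iU; case: (I2 _ _ (gF i iU)).
set T := g @: U.
have cardT : #|T| = #|U|.
  apply: card_in_imset => i j iU jU e; apply: (I1 i j (g i)); [exact: gF | rewrite e; exact: gF].
have TS : T \subset S.
  apply/subsetP => x /imsetP [i iU ->]; case: (I2 _ _ (gF i iU)) => _ xp _.
  by rewrite -memS.
have HT : forall t, #|T :&: up n t| <= #|C :&: up n t|.
  move=> t; apply: (@leq_trans #|U :&: up n t|); last by apply: subset_leq_card; apply: setSI.
  apply: leq_trans (leq_imset_card g _); apply: subset_leq_card; apply/subsetP => x.
  rewrite !inE => /andP [/imsetP [i iU ->] tg]; apply/imsetP; exists i => //.
  by rewrite inE iU inE (leq_trans tg (gle i iU)).
apply/eqP; rewrite eqn_leq; apply/andP; split.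
- pose P := fun t => [forall c, ((c \in C) && (t <= c)) ==> (F c != None)].
  have exP : exists t, P t.
    exists n; apply/forallP => c; apply/implyP => /andP [_].
    by rewrite leqNgt ltn_ord.
  case: (ex_minnP exP) => t Pt tmin.
  have Pt' : forall c, c \in C -> t <= c -> F c != None.
    by move=> c cC tc; have := forallP Pt c; rewrite cC tc.
  apply: leq_trans (rank_le C S t) _.
  rewrite -(cardsID (up n t) U) [leqRHS]addnC.
  apply: leq_add; last first.
    apply: subset_leq_card; apply/subsetP => x; rewrite !inE => /andP [tx xC].
    by rewrite tx xC Pt'.
  apply: leq_trans (leq_imset_card g _); apply: subset_leq_card; apply/subsetP => x.
  rewrite !inE -ltnNge => /andP [xt xS].
  case: (pickP (fun i => F i == Some x)) => [i /eqP Fi | Hn]; last first.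
    have : P x.
      apply/forallP => c; apply/implyP => /andP [cC xc].
      apply: (I3 x) => //; first by rewrite memS.
      by move=> j; rewrite Hn.
    by move/tmin; rewrite leqNgt xt.
  have iU : i \in U by rewrite inE Fi andbT; case: (I2 _ _ Fi).
  have gi : g i = x by rewrite /g Fi.
  apply/imsetP; exists i => //; rewrite inE iU inE -ltnNge.
  case: (leqP t i) => // ti.
  case: t Pt Pt' tmin xt ti => [|t'] Pt Pt' tmin xt ti //.
  have : ~~ P t' by apply/negP => /tmin; rewrite ltnn.
  case/forallPn => c; rewrite negb_imply negbK => /andP [/andP [cC tc] Fc].
  have ct : c < t'.+1.
    by rewrite ltnNge; apply/negP => /(Pt' c cC); rewrite Fc.
  have xc : x <= c by rewrite -ltnS (leq_trans xt) // ltnS.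
  have ci : c < i by apply: leq_trans ct ti.
  by have := I4 _ _ _ Fi cC xc ci; rewrite Fc.
- case: (extend HT) => B [TB HB].
  rewrite /schubert_rank; apply: leq_trans (@leq_bigmax_cond _ (fun B => schubert_basis C B) (fun B => #|S :&: B|) B HB).
  rewrite -cardT; apply: subset_leq_card; by rewrite subsetI TS TB.
Qed.
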